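(* Let $(\alpha_1,\alpha_2)\in\mathbb{C}^2$ and $p_1,p_2\in\mathbb{C}[u]\setminus\{0\}$ with $p_1(u+\alpha_2/2)p_2(u+\alpha_1/2)=p_1(u-\alpha_2/2)p_2(u-\alpha_1/2)$. Then the noncommutative Kleinian fiber product $\mathcal{A}_{\alpha_1,\alpha_2}(p_1,p_2)$, with its $\mathbb{Z}^2$-gradation, is a crystalline graded ring.
   Context: $\tilde{\mathcal{A}}_{\alpha_1,\alpha_2}(p_1,p_2)$ is the $\mathbb{C}$-algebra generated by $H,X_1^\pm,X_2^\pm$ with relations ($i=1,2$) $HX_i^\pm-X_i^\pm H=\pm\alpha_iX_i^\pm$, $X_i^+X_i^-=p_i(H-\alpha_i/2)$, $X_i^-X_i^+=p_i(H+\alpha_i/2)$, $X_1^+X_2^-=X_2^-X_1^+$, $X_1^-X_2^+=X_2^+X_1^-$; $\mathcal{A}_{\alpha_1,\alpha_2}(p_1,p_2)$ is its quotient by the ideal of all $a$ with $f(H)a=0$ for some nonzero polynomial $f$. It is $\mathbb{Z}^2$-graded by $\deg H=0$, $\deg X_i^\pm=\pm\mathbf{e}_i$, with degree-zero component $\mathbb{C}[H]$. A group-graded ring $D=\bigoplus_gD_g$ is crystalline graded if each $D_g$ is free of rank one as a left and as a right $D_e$-module on a common generator $a_g\in D_g$. *)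

(* Defs.v *)
From HB Require Import structures.
From mathcomp Require Import all_boot all_algebra.
From mathcomp Require Import reals.
From mathcomp.real_closed Require Import complex.
From mathcomp.multinomials Require Import monalg.

Set Implicit Arguments.
Unset Strict Implicit.
Unset Printing Implicit Defensive.
Import GRing.Theory.
Local Open Scope ring_scope.

(* The free associative C-algebra on five generators, indexed by 'I_5:     *)
(*   0 = H, 1 = X_1^+, 2 = X_1^-, 3 = X_2^+, 4 = X_2^-.                    *)
Definition FreeAlg (R : realType) := {malg (complex R)[{fmonom 'I_5}]}.

Definition gen (R : realType) (i : 'I_5) : FreeAlg R := << fmu i >>.

Definition gH  (R : realType) : FreeAlg R := gen R (@Ordinal 5 0 isT).
Definition gX1p (R : realType) : FreeAlg R := gen R (@Ordinal 5 1 isT).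
Definition gX1m (R : realType) : FreeAlg R := gen R (@Ordinal 5 2 isT).
Definition gX2p (R : realType) : FreeAlg R := gen R (@Ordinal 5 3 isT).
Definition gX2m (R : realType) : FreeAlg R := gen R (@Ordinal 5 4 isT).

Definition peval (R : realType) (p : {poly complex R}) (x : FreeAlg R)
  : FreeAlg R := \sum_(i < size p) p`_i *: x ^+ i.

(* The ten defining relations of \tilde{A}_{a1,a2}(p1,p2), as elements     *)
(* r of the free algebra (the relation being r = 0).                       *)
Definition rel (R : realType) (a1 a2 : complex R) (p1 p2 : {poly complex R})
  (k : 'I_10) : FreeAlg R :=
  let H := gH R in
  let X1p := gX1p R in let X1m := gX1m R in
  let X2p := gX2p R in let X2m := gX2m R in
  match val k with
  | 0 => H * X1p - X1p * H - a1 *: X1p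
  | 1 => H * X1m - X1m * H + a1 *: X1m
  | 2 => H * X2p - X2p * H - a2 *: X2p
  | 3 => H * X2m - X2m * H + a2 *: X2m
  | 4 => X1p * X1m - peval p1 (H - (a1 / 2%:R) *: 1)
  | 5 => X1m * X1p - peval p1 (H + (a1 / 2%:R) *: 1)
  | 6 => X2p * X2m - peval p2 (H - (a2 / 2%:R) *: 1)
  | 7 => X2m * X2p - peval p2 (H + (a2 / 2%:R) *: 1)
  | 8 => X1p * X2m - X2m * X1p
  | _ => X1m * X2p - X2p * X1m
  end.

(* a * r_k * b.  Its quotient is \tilde{A}_{a1,a2}(p1,p2).                 *)
Definition relIdeal (R : realType) (a1 a2 : complex R) (p1 p2 : {poly complex R})
  (x : FreeAlg R) : Prop :=
  exists s : seq (FreeAlg R * 'I_10 * FreeAlg R),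
    x = \sum_(t <- s) (t.1.1 * rel a1 a2 p1 p2 t.1.2 * t.2).

(* Preimage in the free algebra of the ideal of \tilde A consisting of     *)
(* all a with f(H) a = 0 for some nonzero polynomial f.  The quotient of   *)
(* the free algebra by this ideal is A_{a1,a2}(p1,p2).                     *)
Definition torsIdeal (R : realType) (a1 a2 : complex R) (p1 p2 : {poly complex R})
  (x : FreeAlg R) : Prop :=
  exists f : {poly complex R},
    f != 0 /\ relIdeal a1 a2 p1 p2 (peval f (gH R) * x).

Definition wdeg (m : {fmonom 'I_5}) : int * int :=
  ((count (fun i : 'I_5 => val i == 1%N) m)%:Z
     - (count (fun i : 'I_5 => val i == 2%N) m)%:Z,
   (count (fun i : 'I_5 => val i == 3%N) m)%:Z
     - (count (fun i : 'I_5 => val i == 4%N) m)%:Z).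

(* component D_g of the quotient is the image of these elements.           *)
Definition homog (R : realType) (g : int * int) (x : FreeAlg R) : Prop :=
  forall m : {fmonom 'I_5}, x@_m != 0 -> wdeg m = g.

(* Crystalline gradedness of D = FreeAlg / J (J = torsIdeal) w.r.t. the    *)
(* Z^2-grading above, expressed on representatives: for every g there is   *)
(* a_g in D_g such that d |-> d a_g and d |-> a_g d are bijections         *)
(* D_e -> D_g (i.e. D_g is free of rank one as left and as right           *)
(* D_e-module on the common generator a_g).                                *)
Definition crystalline_quot (R : realType) (J : FreeAlg R -> Prop) : Prop :=
  forall g : int * int, exists a : FreeAlg R,
    [/\ homog g a,
        forall b, homog g b -> exists c, homog (0, 0) c /\ J (b - c * a),
        forall c, homog (0, 0) c -> J (c * a) -> J c,
        forall b, homog g b -> exists c, homog (0, 0) c /\ J (b - a * c)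
      & forall c, homog (0, 0) c -> J (a * c) -> J c].

(* Main.v *)
Require Import Defs.
From HB Require Import structures.
From mathcomp Require Import all_boot all_algebra.
From mathcomp Require Import reals.
From mathcomp.real_closed Require Import complex.
From mathcomp.multinomials Require Import monalg.
From mathcomp Require Import finmap.
From mathcomp Require Import zify ring.
From Stdlib Require Import Classical.
Set Implicit Arguments.
Unset Strict Implicit.
Unset Printing Implicit Defensive.
Import GRing.Theory Num.Theory.
Local Open Scope ring_scope.


Section Abs.
Variables (K : fieldType) (A : algType K).
Variables (H X1p X1m X2p X2m : A) (a1 a2 : K) (p1 p2 : {poly K}).
Variable I : A -> Prop.
Hypothesis I0 : I 0.
Hypothesis ID : forall x y, I x -> I y -> I (x + y).
Hypothesis IMl : forall z x, I x -> I (z * x).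
Hypothesis IMr : forall x z, I x -> I (x * z).

Local Notation phi := (horner_alg H).

Lemma IN x : I x -> I (- x).
Proof. by move=> h; rewrite -mulN1r; apply: IMl. Qed.

Definition eqI x y := I (x - y).

Lemma eqI_refl x : eqI x x. Proof. by rewrite /eqI subrr. Qed.
Lemma eqI_eq x y : x = y -> eqI x y. Proof. by move=> ->; apply: eqI_refl. Qed.
Lemma eqI_sym x y : eqI x y -> eqI y x.
Proof. by rewrite /eqI => h; rewrite -opprB; apply: IN. Qed.
Lemma eqI_trans x y z : eqI x y -> eqI y z -> eqI x z.
Proof. by rewrite /eqI => h1 h2; move: (ID h1 h2); rewrite addrA subrK. Qed.
Lemma eqI_add x y x' y' : eqI x y -> eqI x' y' -> eqI (x + x') (y + y').
Proof. by rewrite /eqI => h1 h2; move: (ID h1 h2); rewrite addrACA -opprD. Qed.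
Lemma eqI_opp x y : eqI x y -> eqI (- x) (- y).
Proof. by rewrite /eqI => h; rewrite opprK addrC -opprB; apply: IN. Qed.
Lemma eqI_sub x y x' y' : eqI x y -> eqI x' y' -> eqI (x - x') (y - y').
Proof. by move=> h1 h2; apply: eqI_add => //; apply: eqI_opp. Qed.
Lemma eqI_mull z x y : eqI x y -> eqI (z * x) (z * y).
Proof. by rewrite /eqI -mulrBr; apply: IMl. Qed.
Lemma eqI_mulr z x y : eqI x y -> eqI (x * z) (y * z).
Proof. by rewrite /eqI -mulrBl; apply: IMr. Qed.
Lemma eqI_scale c x y : eqI x y -> eqI (c *: x) (c *: y).
Proof. by rewrite /eqI -scalerBr -mulr_algl; apply: IMl. Qed.
Lemma eqI_I x y : eqI x y -> I y -> I x.
Proof. by rewrite /eqI => h1 h2; move: (ID h1 h2); rewrite subrK. Qed.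

Lemma phi_comm p q : phi p * phi q = phi q * phi p.
Proof. by rewrite -!rmorphM mulrC. Qed.

Definition shiftP c z := eqI (H * z) (z * H + c *: z).

Lemma shiftP_poly c z : shiftP c z ->
  forall q, eqI (phi q * z) (z * phi (q \Po ('X + c%:P))).
Proof.
move=> hz; elim/poly_ind => [|q k IH].
  by rewrite comp_poly0 !rmorph0 mul0r mulr0; apply: eqI_refl.
rewrite comp_polyD comp_polyM comp_polyX comp_polyC !rmorphD !rmorphM /=.
rewrite horner_algX !horner_algC.
set q' := q \Po _.
apply: (@eqI_trans _ (phi q * (z * H + c *: z) + k *: z)).
  rewrite mulrDl mulr_algl -mulrA; apply: eqI_add; last exact: eqI_refl.
  exact: eqI_mull.
apply: (@eqI_trans _ ((z * phi q') * H + c *: (z * phi q') + k *: z)).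
  rewrite mulrDr mulrA -scalerAr; apply: eqI_add; last exact: eqI_refl.
  by apply: eqI_add; [apply: eqI_mulr | apply: eqI_scale].
apply: eqI_eq; rewrite rmorphD /= horner_algX horner_algC !mulrDr !mulr_algr -scalerAr !mulrA.
by [].
Qed.

Lemma shiftP_polyR c z : shiftP c z ->
  forall q, eqI (z * phi q) (phi (q \Po ('X - c%:P)) * z).
Proof.
move=> hz q; have := shiftP_poly hz (q \Po ('X - c%:P)).
rewrite -comp_polyA comp_polyB comp_polyX comp_polyC addrK comp_polyXr.
exact: eqI_sym.
Qed.

Lemma shiftP_mul c1 c2 x y : shiftP c1 x -> shiftP c2 y -> shiftP (c1 + c2) (x * y).
Proof.
move=> hx hy; rewrite /shiftP.
apply: (@eqI_trans _ ((x * H + c1 *: x) * y)).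
  by rewrite mulrA; apply: eqI_mulr.
apply: (@eqI_trans _ (x * (y * H + c2 *: y) + c1 *: (x * y))).
  rewrite mulrDl -mulrA -scalerAl; apply: eqI_add; last exact: eqI_refl.
  exact: eqI_mull.
apply: eqI_eq; rewrite mulrDr mulrA -scalerAr [c1 + c2]addrC scalerDl addrA.
by [].
Qed.

Lemma shiftP_1 : shiftP 0 1.
Proof. by apply: eqI_eq; rewrite mulr1 mul1r scale0r addr0. Qed.
Lemma shiftP_H : shiftP 0 H.
Proof. by apply: eqI_eq; rewrite scale0r addr0. Qed.
Lemma shiftP_0 c : shiftP c 0.
Proof. by apply: eqI_eq; rewrite mulr0 mul0r scaler0 addr0. Qed.
Lemma shiftP_add c x y : shiftP c x -> shiftP c y -> shiftP c (x + y).
Proof.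
move=> hx hy; rewrite /shiftP mulrDr.
apply: eqI_trans (eqI_add hx hy) _; apply: eqI_eq.
by rewrite mulrDl scalerDr addrACA.
Qed.
Lemma shiftP_scale c k x : shiftP c x -> shiftP c (k *: x).
Proof.
move=> hx; rewrite /shiftP -scalerAr.
apply: eqI_trans (eqI_scale k hx) _; apply: eqI_eq.
by rewrite scalerDr -scalerAl !scalerA mulrC.
Qed.
Lemma shiftP_pow c x k : shiftP c x -> shiftP (c *+ k) (x ^+ k).
Proof.
move=> hx; elim: k => [|k IH]; first by rewrite expr0 mulr0n; apply: shiftP_1.
by rewrite exprS mulrS; apply: shiftP_mul.
Qed.
Lemma shiftP_phi q : shiftP 0 (phi q).
Proof.
have hc := phi_comm 'X q; rewrite horner_algX in hc.
by apply: eqI_eq; rewrite scale0r addr0.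
Qed.

Definition J x := exists f, f != 0 /\ I (phi f * x).

Lemma J_I x : I x -> J x.
Proof. by move=> h; exists (1 : {poly K}); rewrite oner_eq0 rmorph1 mul1r. Qed.
Lemma J_add x y : J x -> J y -> J (x + y).
Proof.
move=> [f [f0 hf]] [g [g0 hg]]; exists (f * g); split; first by rewrite mulf_neq0.
rewrite mulrDr; apply: ID.
  by rewrite rmorphM phi_comm -mulrA; apply: IMl.
by rewrite rmorphM -mulrA; apply: IMl.
Qed.
Lemma J_opp x : J x -> J (- x).
Proof. by move=> [f [f0 hf]]; exists f; split => //; rewrite mulrN; apply: IN. Qed.
Lemma J_mulr x z : J x -> J (x * z).
Proof. by move=> [f [f0 hf]]; exists f; split => //; rewrite mulrA; apply: IMr. Qed.
Lemma J_phiMl q x : J x -> J (phi q * x).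
Proof.
move=> [f [f0 hf]]; exists f; split => //.
by rewrite mulrA phi_comm -mulrA; apply: IMl.
Qed.
Lemma J_cancel f x : f != 0 -> J (phi f * x) -> J x.
Proof.
move=> f0 [g [g0 hg]]; exists (g * f); split; first by rewrite mulf_neq0.
by rewrite rmorphM -mulrA.
Qed.
Lemma comp_neq0 (f : {poly K}) (c : K) : f != 0 -> f \Po ('X - c%:P) != 0.
Proof. by move=> f0; rewrite comp_poly2_eq0 ?size_XsubC. Qed.
Lemma comp_neq0' (f : {poly K}) (c : K) : f != 0 -> f \Po ('X + c%:P) != 0.
Proof. by move=> f0; rewrite comp_poly2_eq0 ?size_XaddC. Qed.

Lemma J_shiftMl c z x : shiftP c z -> J x -> J (z * x).
Proof.
move=> hz [f [f0 hf]]; exists (f \Po ('X - c%:P)); split; first exact: comp_neq0.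
rewrite mulrA; apply: (@eqI_I _ (z * phi f * x)); last by rewrite -mulrA; apply: IMl.
apply: eqI_mulr; apply: eqI_sym; exact: shiftP_polyR.
Qed.
Lemma J_eqI x y : J x -> eqI x y -> J y.
Proof.
move=> hx hxy; have -> : y = x - (x - y) by rewrite opprB addrC subrK.
by apply: J_add => //; apply: J_opp; apply: J_I.
Qed.
Lemma J_cancel_r c x f : shiftP c x -> f != 0 -> J (x * phi f) -> J x.
Proof.
move=> hx f0 hJ; apply: (@J_cancel (f \Po ('X - c%:P))); first exact: comp_neq0.
by apply: J_eqI hJ _; apply: shiftP_polyR.
Qed.

Definition eqJ x y := J (x - y).
Lemma eqI_J x y : eqI x y -> eqJ x y. Proof. exact: J_I. Qed.
Lemma eqJ_refl x : eqJ x x. Proof. by apply: eqI_J; apply: eqI_refl. Qed.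
Lemma eqJ_sym x y : eqJ x y -> eqJ y x.
Proof. by rewrite /eqJ => h; rewrite -opprB; apply: J_opp. Qed.
Lemma eqJ_trans x y z : eqJ x y -> eqJ y z -> eqJ x z.
Proof. by rewrite /eqJ => h1 h2; move: (J_add h1 h2); rewrite addrA subrK. Qed.
Lemma eqJ_add x y x' y' : eqJ x y -> eqJ x' y' -> eqJ (x + x') (y + y').
Proof. by rewrite /eqJ => h1 h2; move: (J_add h1 h2); rewrite addrACA -opprD. Qed.
Lemma eqJ_opp x y : eqJ x y -> eqJ (- x) (- y).
Proof. by rewrite /eqJ => h; rewrite opprK addrC -opprB; apply: J_opp. Qed.
Lemma eqJ_sub x y x' y' : eqJ x y -> eqJ x' y' -> eqJ (x - x') (y - y').
Proof. by move=> h1 h2; apply: eqJ_add => //; apply: eqJ_opp. Qed.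
Lemma eqJ_mulr z x y : eqJ x y -> eqJ (x * z) (y * z).
Proof. by rewrite /eqJ -mulrBl; apply: J_mulr. Qed.
Lemma eqJ_phiMl q x y : eqJ x y -> eqJ (phi q * x) (phi q * y).
Proof. by rewrite /eqJ -mulrBr; apply: J_phiMl. Qed.
Lemma eqJ_shiftMl c z x y : shiftP c z -> eqJ x y -> eqJ (z * x) (z * y).
Proof. by rewrite /eqJ -mulrBr; apply: J_shiftMl. Qed.
Lemma J_eqJ x y : J x -> eqJ x y -> J y.
Proof.
move=> hx hxy; have -> : y = x - (x - y) by rewrite opprB addrC subrK.
by apply: J_add => //; apply: J_opp.
Qed.
Lemma eqJ0 x : J x -> eqJ x 0. Proof. by rewrite /eqJ subr0. Qed.
Lemma eqJ0' x : eqJ x 0 -> J x. Proof. by rewrite /eqJ subr0. Qed.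

Lemma eqI_sum (T : Type) (r : seq T) (F G : T -> A) :
  (forall t, eqI (F t) (G t)) -> eqI (\sum_(t <- r) F t) (\sum_(t <- r) G t).
Proof.
move=> h; elim: r => [|t r IH]; first by rewrite !big_nil; apply: eqI_refl.
by rewrite !big_cons; apply: eqI_add.
Qed.

Hypothesis hX1p : shiftP a1 X1p.
Hypothesis hX1m : shiftP (- a1) X1m.
Hypothesis hX2p : shiftP a2 X2p.
Hypothesis hX2m : shiftP (- a2) X2m.
Hypothesis c4 : eqI (X1p * X1m) (phi (p1 \Po ('X - (a1 / 2%:R)%:P))).
Hypothesis c5 : eqI (X1m * X1p) (phi (p1 \Po ('X + (a1 / 2%:R)%:P))).
Hypothesis c6 : eqI (X2p * X2m) (phi (p2 \Po ('X - (a2 / 2%:R)%:P))).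
Hypothesis c7 : eqI (X2m * X2p) (phi (p2 \Po ('X + (a2 / 2%:R)%:P))).
Hypothesis c8 : eqI (X1p * X2m) (X2m * X1p).
Hypothesis c9 : eqI (X1m * X2p) (X2p * X1m).
Hypothesis p1n : p1 != 0.
Hypothesis p2n : p2 != 0.

Definition nw (la lb : A) (s : seq bool) := \prod_(b <- s) (if b then la else lb).
Definition LA (m : int) := if 0 <= m then X1p else X1m.
Definition LAb (m : int) := if 0 <= m then X1m else X1p.
Definition LB (m : int) := if 0 <= m then X2p else X2m.
Definition LBb (m : int) := if 0 <= m then X2m else X2p.
Definition nwg (g : int * int) s := nw (LA g.1) (LB g.2) s.
Definition valid (g : int * int) (s : seq bool) :=
  count id s = absz g.1 /\ count negb s = absz g.2.
Definition Nrm g z := exists l : seq ({poly K} * seq bool),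
  (forall t, t \in l -> valid g t.2) /\
  eqI z (\sum_(t <- l) phi t.1 * nwg g t.2).

Lemma nw_rcons la lb s b : nw la lb (rcons s b) = nw la lb s * (if b then la else lb).
Proof. by rewrite /nw -cats1 big_cat big_seq1. Qed.
Lemma nw_cat la lb s1 s2 : nw la lb (s1 ++ s2) = nw la lb s1 * nw la lb s2.
Proof. by rewrite /nw big_cat. Qed.
Lemma nw_cons la lb s b : nw la lb (b :: s) = (if b then la else lb) * nw la lb s.
Proof. by rewrite /nw big_cons. Qed.
Lemma nw_nseq la lb k b : nw la lb (nseq k b) = (if b then la else lb) ^+ k.
Proof.
elim: k => [|k IH]; first by rewrite /nw big_nil expr0.
by rewrite /= nw_cons IH exprS.
Qed.
Lemma nw_eq la lb la' lb' s : (count id s = 0%N \/ la = la') ->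
  (count negb s = 0%N \/ lb = lb') -> nw la lb s = nw la' lb' s.
Proof.
elim: s => [|b s IH] h1 h2; first by rewrite /nw !big_nil.
rewrite !nw_cons; case: b h1 h2 => /= h1 h2.
  have e : la = la' by case: h1 => //; rewrite add1n.
  by rewrite (IH (or_intror e)) ?e //.
have e : lb = lb' by case: h2 => //; rewrite add1n.
by rewrite (IH _ (or_intror e)) ?e //.
Qed.
Lemma nw_shift la lb ca cb s : shiftP ca la -> shiftP cb lb ->
  exists c, shiftP c (nw la lb s).
Proof.
move=> ha hb; elim: s => [|b s [c hc]]; first by exists 0; rewrite /nw big_nil; apply: shiftP_1.
rewrite nw_cons; case: b.
  by exists (ca + c); apply: shiftP_mul.
by exists (cb + c); apply: shiftP_mul.
Qed.

Lemma rcons_nseq T k (x : T) : rcons (nseq k x) x = nseq k.+1 x.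
Proof. by elim: k => //= k ->. Qed.

Lemma mem_decomp (b : bool) s : b \in s -> exists s1 k, s = s1 ++ b :: nseq k (~~ b).
Proof.
elim/last_ind: s => [|s c IH] //.
rewrite mem_rcons in_cons; case: (eqVneq b c) => [e _|ne /= hb].
  by exists s, 0%N; rewrite cats1 e.
have [s1 [k ->]] := IH hb.
have ec : c = ~~ b by move: ne {IH hb}; case: b; case: c.
by exists s1, k.+1; rewrite rcons_cat /= ec rcons_nseq.
Qed.

Lemma comm_pow P Q : eqI (Q * P) (P * Q) -> forall k, eqI (Q ^+ k * P) (P * Q ^+ k).
Proof.
move=> h; elim=> [|k IH]; first by rewrite expr0 mul1r mulr1; apply: eqI_refl.
rewrite exprSr; apply: (@eqI_trans _ (Q ^+ k * (P * Q))).
  by rewrite -mulrA; apply: eqI_mull.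
by rewrite mulrA [P * (_ * _)]mulrA; apply: eqI_mulr.
Qed.

Lemma cancel_gen P Pb Q f c : eqI (P * Pb) (phi f) -> shiftP c Q ->
  (eqI (Q * Pb) (Pb * Q) \/ eqI (Q * P) (P * Q)) ->
  forall k, exists f', eqI (P * Q ^+ k * Pb) (phi f' * Q ^+ k).
Proof.
move=> hPP hQ [] hc k.
  exists f; rewrite -mulrA; apply: eqI_trans (eqI_mull P (comm_pow hc k)) _.
  by rewrite mulrA; apply: eqI_mulr.
exists (f \Po ('X - (c *+ k)%:P)).
apply: eqI_trans (eqI_mulr Pb (eqI_sym (comm_pow hc k))) _.
rewrite -mulrA; apply: eqI_trans (eqI_mull _ hPP) _.
exact: shiftP_polyR (shiftP_pow k hQ) f.
Qed.

Lemma nw_cancel (la lb Pb : A) (b : bool) f ca cb s :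
  shiftP ca la -> shiftP cb lb ->
  eqI ((if b then la else lb) * Pb) (phi f) ->
  (eqI ((if b then lb else la) * Pb) (Pb * (if b then lb else la)) \/
   eqI ((if b then lb else la) * (if b then la else lb))
       ((if b then la else lb) * (if b then lb else la))) ->
  b \in s ->
  exists f' s1 k, s = s1 ++ b :: nseq k (~~ b) /\
    eqI (nw la lb s * Pb) (phi f' * nw la lb (s1 ++ nseq k (~~ b))).
Proof.
move=> ha hb hPP hcomm /mem_decomp [s1 [k ->]].
have hQ : exists cq, shiftP cq (if b then lb else la).
  by case: b hPP hcomm => _ _; [exists cb | exists ca].
case: hQ => cq hQ.
have [f' hf'] := cancel_gen hPP hQ hcomm k.
have [c1 hc1] := nw_shift s1 ha hb.
exists (f' \Po ('X - c1%:P)), s1, k; split => //.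
have eQ : (if ~~ b then la else lb) = (if b then lb else la) by case: (b).
rewrite nw_cat nw_cons nw_cat !nw_nseq eQ.
rewrite -!mulrA; apply: (@eqI_trans _ (nw la lb s1 * (phi f' * (if b then lb else la) ^+ k))).
  by apply: eqI_mull; rewrite mulrA.
rewrite !mulrA; apply: eqI_mulr; exact: shiftP_polyR.
Qed.

Lemma Nrm0 g : Nrm g 0.
Proof. by exists [::]; split => //; rewrite big_nil; apply: eqI_refl. Qed.
Lemma NrmD g x y : Nrm g x -> Nrm g y -> Nrm g (x + y).
Proof.
move=> [l1 [v1 e1]] [l2 [v2 e2]]; exists (l1 ++ l2); split.
  by move=> t; rewrite mem_cat => /orP [] ?; [apply: v1|apply: v2].
by rewrite big_cat; apply: eqI_add.
Qed.
Lemma NrmM g q x : Nrm g x -> Nrm g (phi q * x).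
Proof.
move=> [l [v e]]; exists [seq (q * t.1, t.2) | t <- l]; split.
  by move=> t /mapP [u hu] ->; exact: (v u hu).
rewrite big_map; apply: eqI_trans (eqI_mull _ e) _.
rewrite mulr_sumr; apply: eqI_eq; apply: eq_bigr => t _.
by rewrite rmorphM mulrA.
Qed.
Lemma NrmZ g c x : Nrm g x -> Nrm g (c *: x).
Proof.
move=> h; have := NrmM c%:P h; rewrite horner_algC mulr_algl //.
Qed.
Lemma Nrm_eqI g x y : Nrm g x -> eqI y x -> Nrm g y.
Proof. by move=> [l [v e]] h; exists l; split => //; apply: eqI_trans h e. Qed.
Lemma Nrm_nw g s : valid g s -> Nrm g (nwg g s).
Proof.
move=> v; exists [:: (1, s)]; split; first by move=> t; rewrite inE => /eqP ->.
by rewrite big_seq1 rmorph1 mul1r; apply: eqI_refl.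
Qed.
Lemma Nrm_step g g' x z : (forall s, valid g s -> Nrm g' (nwg g s * x)) ->
  Nrm g z -> Nrm g' (z * x).
Proof.
move=> hs [l [v e]]; apply: Nrm_eqI (eqI_mulr x e).
rewrite mulr_suml; elim: l v {e} => [|t l IH] v; first by rewrite big_nil; apply: Nrm0.
rewrite big_cons; apply: NrmD; last by apply: IH => u hu; apply: v; rewrite inE hu orbT.
by rewrite -mulrA; apply: NrmM; apply: hs; apply: v; rewrite inE eqxx.
Qed.

Lemma shLA m : exists c, shiftP c (LA m).
Proof. by rewrite /LA; case: ifP => _; [exists a1 | exists (- a1)]. Qed.
Lemma shLAb m : exists c, shiftP c (LAb m).
Proof. by rewrite /LAb; case: ifP => _; [exists (- a1) | exists a1]. Qed.
Lemma shLB m : exists c, shiftP c (LB m).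
Proof. by rewrite /LB; case: ifP => _; [exists a2 | exists (- a2)]. Qed.
Lemma shLBb m : exists c, shiftP c (LBb m).
Proof. by rewrite /LBb; case: ifP => _; [exists (- a2) | exists a2]. Qed.

Lemma L_H g s : valid g s -> Nrm g (nwg g s * H).
Proof.
move=> v; have [ca ha] := shLA g.1; have [cb hb] := shLB g.2.
have [c hc] := nw_shift s ha hb.
have := shiftP_polyR hc 'X; rewrite horner_algX comp_polyX => h.
exact: Nrm_eqI (NrmM _ (Nrm_nw v)) h.
Qed.

Lemma true_in s : (0 < count id s)%N -> true \in s.
Proof. by rewrite -has_count => /hasP [b hb hb']; case: b hb hb'. Qed.
Lemma false_in s : (0 < count negb s)%N -> false \in s.
Proof. by rewrite -has_count => /hasP [b hb hb']; case: b hb hb'. Qed.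

Lemma le0F (m : int) : m < 0 -> (0 <= m) = false.
Proof. by move=> h; apply/negbTE/negP => h'; lia. Qed.

Lemma L_X1p g s : valid g s -> Nrm (g.1 + 1, g.2) (nwg g s * X1p).
Proof.
case=> v1 v2; case: (lerP 0 g.1) => hg.
  have hg' : 0 <= g.1 + 1 by lia.
  have -> : nwg g s * X1p = nwg (g.1 + 1, g.2) (rcons s true).
    by rewrite /nwg nw_rcons /LA /= hg hg'.
  by apply: Nrm_nw; split; rewrite -cats1 count_cat /=; lia.
have hin : true \in s by apply: true_in; lia.
have [cb hb] := shLB g.2.
have la : LA g.1 = X1m by rewrite /LA le0F.
have hcomm : eqI (LB g.2 * X1p) (X1p * LB g.2) \/ eqI (LB g.2 * X1m) (X1m * LB g.2).
  by rewrite /LB; case: ifP => _; [right; apply: eqI_sym c9 | left; apply: eqI_sym c8].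
have [f' [s1 [k [es h]]]] := @nw_cancel X1m (LB g.2) X1p true _ _ _ s hX1m hb c5 hcomm hin.
have vs : valid (g.1 + 1, g.2) (s1 ++ nseq k false).
  move: v1 v2; rewrite /valid es !count_cat /= !count_nseq /= => v1 v2; split; lia.
have enw : nw X1m (LB g.2) (s1 ++ nseq k false) = nwg (g.1 + 1, g.2) (s1 ++ nseq k false).
  rewrite /nwg /=; apply: nw_eq; last by right.
  case: (ltrP (g.1 + 1) 0) => h'; first by right; rewrite /LA le0F.
  by left; case: vs => /= c1 _; lia.
rewrite /nwg la; apply: Nrm_eqI (NrmM f' (Nrm_nw vs)) _; rewrite -enw; exact: h.
Qed.

Lemma L_X1m g s : valid g s -> Nrm (g.1 - 1, g.2) (nwg g s * X1m).
Proof.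
case=> v1 v2; case: (ltrP 0 g.1) => hg; last first.
  have hg' : g.1 - 1 < 0 by lia.
  have -> : nwg g s * X1m = nwg (g.1 - 1, g.2) (rcons s true).
    rewrite /nwg nw_rcons /LA /= (le0F hg') /=; congr (_ * _); apply: nw_eq; last by right.
    case: (ltrP g.1 0) => h'; first by right.
    by left; lia.
  by apply: Nrm_nw; split; rewrite -cats1 count_cat /=; lia.
have hin : true \in s by apply: true_in; lia.
have [cb hb] := shLB g.2.
have la : LA g.1 = X1p by rewrite /LA (_ : 0 <= g.1) //; lia.
have hcomm : eqI (LB g.2 * X1m) (X1m * LB g.2) \/ eqI (LB g.2 * X1p) (X1p * LB g.2).
  by rewrite /LB; case: ifP => _; [left; apply: eqI_sym c9 | right; apply: eqI_sym c8].
have [f' [s1 [k [es h]]]] := @nw_cancel X1p (LB g.2) X1m true _ _ _ s hX1p hb c4 hcomm hin.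
have vs : valid (g.1 - 1, g.2) (s1 ++ nseq k false).
  move: v1 v2; rewrite /valid es !count_cat /= !count_nseq /= => v1 v2; split; lia.
have enw : nw X1p (LB g.2) (s1 ++ nseq k false) = nwg (g.1 - 1, g.2) (s1 ++ nseq k false).
  rewrite /nwg /=; apply: nw_eq; last by right.
  by right; rewrite /LA (_ : 0 <= g.1 - 1) //; lia.
rewrite /nwg la; apply: Nrm_eqI (NrmM f' (Nrm_nw vs)) _; rewrite -enw; exact: h.
Qed.

Lemma L_X2p g s : valid g s -> Nrm (g.1, g.2 + 1) (nwg g s * X2p).
Proof.
case=> v1 v2; case: (lerP 0 g.2) => hg.
  have hg' : 0 <= g.2 + 1 by lia.
  have -> : nwg g s * X2p = nwg (g.1, g.2 + 1) (rcons s false).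
    by rewrite /nwg nw_rcons /LB /= hg hg'.
  by apply: Nrm_nw; split; rewrite -cats1 count_cat /=; lia.
have hin : false \in s by apply: false_in; lia.
have [ca ha] := shLA g.1.
have lb : LB g.2 = X2m by rewrite /LB le0F.
have hcomm : eqI (LA g.1 * X2p) (X2p * LA g.1) \/ eqI (LA g.1 * X2m) (X2m * LA g.1).
  by rewrite /LA; case: ifP => _; [right; apply: c8 | left; apply: c9].
have [f' [s1 [k [es h]]]] := @nw_cancel (LA g.1) X2m X2p false _ _ _ s ha hX2m c7 hcomm hin.
have vs : valid (g.1, g.2 + 1) (s1 ++ nseq k true).
  move: v1 v2; rewrite /valid es !count_cat /= !count_nseq /= => v1 v2; split; lia.
have enw : nw (LA g.1) X2m (s1 ++ nseq k true) = nwg (g.1, g.2 + 1) (s1 ++ nseq k true).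
  rewrite /nwg /=; apply: nw_eq; first by right.
  case: (ltrP (g.2 + 1) 0) => h'; first by right; rewrite /LB le0F.
  by left; case: vs => /= _ c2; lia.
rewrite /nwg lb; apply: Nrm_eqI (NrmM f' (Nrm_nw vs)) _; rewrite -enw; exact: h.
Qed.

Lemma L_X2m g s : valid g s -> Nrm (g.1, g.2 - 1) (nwg g s * X2m).
Proof.
case=> v1 v2; case: (ltrP 0 g.2) => hg; last first.
  have hg' : g.2 - 1 < 0 by lia.
  have -> : nwg g s * X2m = nwg (g.1, g.2 - 1) (rcons s false).
    rewrite /nwg nw_rcons /LB /= (le0F hg') /=; congr (_ * _); apply: nw_eq; first by right.
    case: (ltrP g.2 0) => h'; first by right.
    by left; lia.
  by apply: Nrm_nw; split; rewrite -cats1 count_cat /=; lia.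
have hin : false \in s by apply: false_in; lia.
have [ca ha] := shLA g.1.
have lb : LB g.2 = X2p by rewrite /LB (_ : 0 <= g.2) //; lia.
have hcomm : eqI (LA g.1 * X2m) (X2m * LA g.1) \/ eqI (LA g.1 * X2p) (X2p * LA g.1).
  by rewrite /LA; case: ifP => _; [left; apply: c8 | right; apply: c9].
have [f' [s1 [k [es h]]]] := @nw_cancel (LA g.1) X2p X2m false _ _ _ s ha hX2p c6 hcomm hin.
have vs : valid (g.1, g.2 - 1) (s1 ++ nseq k true).
  move: v1 v2; rewrite /valid es !count_cat /= !count_nseq /= => v1 v2; split; lia.
have enw : nw (LA g.1) X2p (s1 ++ nseq k true) = nwg (g.1, g.2 - 1) (s1 ++ nseq k true).
  rewrite /nwg /=; apply: nw_eq; first by right.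
  by right; rewrite /LB (_ : 0 <= g.2 - 1) //; lia.
rewrite /nwg lb; apply: Nrm_eqI (NrmM f' (Nrm_nw vs)) _; rewrite -enw; exact: h.
Qed.

Variable Hg : int * int -> A -> Prop.
Hypothesis Hg0 : forall g, Hg g 0.
Hypothesis HgD : forall g x y, Hg g x -> Hg g y -> Hg g (x + y).
Hypothesis HgZ : forall g c x, Hg g x -> Hg g (c *: x).
Hypothesis HgM : forall g h x y, Hg g x -> Hg h y -> Hg (g.1 + h.1, g.2 + h.2) (x * y).
Hypothesis Hg1 : Hg (0, 0) 1.
Hypothesis HgH : Hg (0, 0) H.
Hypothesis HgX1p : Hg (1, 0) X1p.
Hypothesis HgX1m : Hg (-1, 0) X1m.
Hypothesis HgX2p : Hg (0, 1) X2p.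
Hypothesis HgX2m : Hg (0, -1) X2m.
Hypothesis Hg_ind : forall P : int * int -> A -> Prop,
  (forall g, P g 0) ->
  (forall g x y, P g x -> P g y -> P g (x + y)) ->
  (forall g c x, P g x -> P g (c *: x)) ->
  P (0, 0) 1 ->
  (forall g z, P g z -> P g (z * H)) ->
  (forall g z, P g z -> P (g.1 + 1, g.2) (z * X1p)) ->
  (forall g z, P g z -> P (g.1 - 1, g.2) (z * X1m)) ->
  (forall g z, P g z -> P (g.1, g.2 + 1) (z * X2p)) ->
  (forall g z, P g z -> P (g.1, g.2 - 1) (z * X2m)) ->
  forall g b, Hg g b -> P g b.

Lemma Hg_eq g g' x : g = g' -> Hg g x -> Hg g' x. Proof. by move=> ->. Qed.
Lemma HgB g x y : Hg g x -> Hg g y -> Hg g (x - y).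
Proof. by move=> hx hy; apply: HgD => //; rewrite -scaleN1r; apply: HgZ. Qed.

Definition sh (g : int * int) : K := g.1%:~R * a1 + g.2%:~R * a2.

Lemma Hg_shift g b : Hg g b -> shiftP (sh g) b.
Proof.
apply: (Hg_ind (P := fun g b => shiftP (sh g) b)).
- by move=> ?; apply: shiftP_0.
- by move=> ? ? ?; apply: shiftP_add.
- by move=> ? ? ?; apply: shiftP_scale.
- by rewrite /sh /= !mulr0z !mul0r addr0; apply: shiftP_1.
- by move=> g0 z hz; rewrite -[sh g0]addr0; apply: shiftP_mul => //; apply: shiftP_H.
- move=> g0 z hz; have -> : sh (g0.1 + 1, g0.2) = sh g0 + a1.
    by rewrite /sh /= intrD mulrDl mul1r addrAC.
  by apply: shiftP_mul.
- move=> g0 z hz; have -> : sh (g0.1 - 1, g0.2) = sh g0 + - a1.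
    by rewrite /sh /= intrB mulrBl mul1r addrAC.
  by apply: shiftP_mul.
- move=> g0 z hz; have -> : sh (g0.1, g0.2 + 1) = sh g0 + a2.
    by rewrite /sh /= intrD mulrDl mul1r addrA.
  by apply: shiftP_mul.
- move=> g0 z hz; have -> : sh (g0.1, g0.2 - 1) = sh g0 + - a2.
    by rewrite /sh /= intrB mulrBl mul1r addrA.
  by apply: shiftP_mul.
Qed.

Lemma Hg_phi q : Hg (0, 0) (phi q).
Proof.
elim/poly_ind: q => [|q c IH]; first by rewrite rmorph0.
rewrite rmorphD rmorphM /= horner_algX horner_algC; apply: HgD.
  by apply: (Hg_eq _ (HgM IH HgH)); rewrite /= addr0.
by rewrite -mulr_algl mulr1; apply: HgZ.
Qed.

Lemma Nrm_all g b : Hg g b -> Nrm g b.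
Proof.
apply: Hg_ind.
- exact: Nrm0.
- by move=> ? ? ?; apply: NrmD.
- by move=> ? ? ?; apply: NrmZ.
- have := @Nrm_nw (0, 0) [::]; rewrite /nwg /nw big_nil; apply; by split.
- by move=> g0 z; apply: Nrm_step; apply: L_H.
- by move=> g0 z; apply: Nrm_step; apply: L_X1p.
- by move=> g0 z; apply: Nrm_step; apply: L_X1m.
- by move=> g0 z; apply: Nrm_step; apply: L_X2p.
- by move=> g0 z; apply: Nrm_step; apply: L_X2m.
Qed.

Lemma red0 z : Hg (0, 0) z -> exists r, eqI z (phi r).
Proof.
move=> /Nrm_all [l [v e]]; exists (\sum_(t <- l) t.1).
apply: eqI_trans e _; apply: eqI_eq; rewrite rmorph_sum; apply: eq_big_seq => t ht.
have [c1 c2] := v t ht.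
have -> : t.2 = [::].
  apply: size0nil; rewrite -(count_predC id t.2).
  by rewrite c1 (_ : count (predC id) t.2 = count negb t.2) // c2.
by rewrite /nwg /nw big_nil mulr1.
Qed.

Lemma pow_cancel P Pb f c : eqI (P * Pb) (phi f) -> f != 0 -> shiftP c P ->
  forall k, exists f', f' != 0 /\ eqI (P ^+ k * Pb ^+ k) (phi f').
Proof.
move=> hPP f0 hP; elim=> [|k [fk [fk0 IH]]].
  by exists 1; rewrite oner_eq0 !expr0 mul1r rmorph1; split => //; apply: eqI_refl.
exists ((fk \Po ('X - c%:P)) * f); split; first by rewrite mulf_neq0 // comp_neq0.
rewrite exprS exprSr.
have -> : P * P ^+ k * (Pb ^+ k * Pb) = P * (P ^+ k * Pb ^+ k) * Pb by rewrite !mulrA.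
apply: (@eqI_trans _ (P * phi fk * Pb)); first by apply: eqI_mulr; apply: eqI_mull.
apply: (@eqI_trans _ (phi (fk \Po ('X - c%:P)) * P * Pb)).
  by apply: eqI_mulr; apply: shiftP_polyR.
rewrite -mulrA rmorphM; exact: eqI_mull.
Qed.

Lemma sandwich P Z Q c u : shiftP c P -> eqI Z (phi u) ->
  eqI (P * Z * Q) (phi (u \Po ('X - c%:P)) * (P * Q)).
Proof.
move=> hP hZ; apply: (@eqI_trans _ (P * phi u * Q)).
  by apply: eqI_mulr; apply: eqI_mull.
by rewrite mulrA; apply: eqI_mulr; apply: shiftP_polyR.
Qed.

Lemma pairA m : (exists f, f != 0 /\ eqI (LA m * LAb m) (phi f)) /\
                (exists f, f != 0 /\ eqI (LAb m * LA m) (phi f)).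
Proof.
rewrite /LA /LAb; case: ifP => _; split.
- by eexists; split; last exact: c4; apply: comp_neq0.
- by eexists; split; last exact: c5; apply: comp_neq0'.
- by eexists; split; last exact: c5; apply: comp_neq0'.
- by eexists; split; last exact: c4; apply: comp_neq0.
Qed.
Lemma pairB m : (exists f, f != 0 /\ eqI (LB m * LBb m) (phi f)) /\
                (exists f, f != 0 /\ eqI (LBb m * LB m) (phi f)).
Proof.
rewrite /LB /LBb; case: ifP => _; split.
- by eexists; split; last exact: c6; apply: comp_neq0.
- by eexists; split; last exact: c7; apply: comp_neq0'.
- by eexists; split; last exact: c7; apply: comp_neq0'.
- by eexists; split; last exact: c6; apply: comp_neq0.
Qed.

Lemma prod_cancel P Pb Q Qb a b :
  (exists f, f != 0 /\ eqI (P * Pb) (phi f)) ->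
  (exists f, f != 0 /\ eqI (Q * Qb) (phi f)) ->
  (exists c, shiftP c P) -> (exists c, shiftP c Q) ->
  exists f, f != 0 /\ eqI (P ^+ a * Q ^+ b * (Qb ^+ b * Pb ^+ a)) (phi f).
Proof.
move=> [f [f0 hf]] [g [g0 hg]] [c hP] [d hQ].
have [fa [fa0 ha]] := pow_cancel hf f0 hP a.
have [gb [gb0 hb]] := pow_cancel hg g0 hQ b.
exists ((gb \Po ('X - (c *+ a)%:P)) * fa); split; first by rewrite mulf_neq0 // comp_neq0.
have -> : P ^+ a * Q ^+ b * (Qb ^+ b * Pb ^+ a) = P ^+ a * (Q ^+ b * Qb ^+ b) * Pb ^+ a.
  by rewrite !mulrA.
apply: eqI_trans (sandwich _ (shiftP_pow a hP) hb) _.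
by rewrite rmorphM; apply: eqI_mull.
Qed.

Lemma HgLA m : Hg (if 0 <= m then 1 else -1, 0) (LA m).
Proof. by rewrite /LA; case: ifP. Qed.
Lemma HgLAb m : Hg (if 0 <= m then -1 else 1, 0) (LAb m).
Proof. by rewrite /LAb; case: ifP. Qed.
Lemma HgLB m : Hg (0, if 0 <= m then 1 else -1) (LB m).
Proof. by rewrite /LB; case: ifP. Qed.
Lemma HgLBb m : Hg (0, if 0 <= m then -1 else 1) (LBb m).
Proof. by rewrite /LBb; case: ifP. Qed.

Lemma Hg_pow u v z k : Hg (u, v) z -> Hg (u * k%:Z, v * k%:Z) (z ^+ k).
Proof.
move=> hz; elim: k => [|k IH]; first by rewrite !mulr0 expr0.
rewrite exprS; apply: (Hg_eq _ (HgM hz IH)) => /=.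
by congr pair; rewrite -addn1 PoszD mulrDr mulr1 addrC.
Qed.

Lemma min_gen (P : {poly K} -> Prop) :
  (forall r1 r2 e, P r1 -> P r2 -> P (r1 - e * r2)) ->
  forall q, q != 0 -> P q -> exists d, [/\ d != 0, P d & forall r, P r -> d %| r].
Proof.
move=> hs q; move: {2}(size q) (leqnn (size q)) => n.
elim: n q => [|n IH] q hn q0 Pq.
  by move: q0; rewrite -size_poly_eq0; move: hn; case: (size q).
case: (classic (forall r, P r -> q %| r)) => [h|h]; first by exists q.
have [r hr] := not_all_ex_not _ _ h.
have [Pr nd] := imply_to_and _ _ hr.
have Pm : P (r %% q).
  have := hs r q (r %/ q) Pr Pq.
  by rewrite {1}(divp_eq r q) addrC addKr.
have m0 : r %% q != 0 by apply/negP => /eqP h0; apply: nd; rewrite /dvdp h0.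
apply: (IH (r %% q)) => //.
by have := ltn_modp r q; rewrite q0 => /(leq_trans)-/(_ _ hn).
Qed.

Theorem abs_main (g : int * int) : exists a, [/\ Hg g a,
  forall b, Hg g b -> exists c, Hg (0, 0) c /\ J (b - c * a),
  forall c, Hg (0, 0) c -> J (c * a) -> J c,
  forall b, Hg g b -> exists c, Hg (0, 0) c /\ J (b - a * c)
  & forall c, Hg (0, 0) c -> J (a * c) -> J c].
Proof.
case: g => m n.
pose x := LA m ^+ absz m * LB n ^+ absz n.
pose y := LBb n ^+ absz n * LAb m ^+ absz m.
have Hx : Hg (m, n) x.
  apply: (Hg_eq _ (HgM (Hg_pow (absz m) (HgLA m)) (Hg_pow (absz n) (HgLB n)))) => /=.
  by congr pair; [case: (lerP 0 m) => h | case: (lerP 0 n) => h]; lia.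
have Hy : Hg (- m, - n) y.
  apply: (Hg_eq _ (HgM (Hg_pow (absz n) (HgLBb n)) (Hg_pow (absz m) (HgLAb m)))) => /=.
  by congr pair; [case: (lerP 0 m) => h | case: (lerP 0 n) => h]; lia.
have [q [q0 hxy]] : exists q, q != 0 /\ eqI (x * y) (phi q).
  rewrite /x /y; apply: prod_cancel; [exact: (pairA m).1 | exact: (pairB n).1
     | exact: shLA | exact: shLB].
have [q' [q0' hyx]] : exists q, q != 0 /\ eqI (y * x) (phi q).
  rewrite /x /y; apply: prod_cancel; [exact: (pairB n).2 | exact: (pairA m).2
     | exact: shLBb | exact: shLAb].
clearbody x y.
pose Ig r := exists b, Hg (m, n) b /\ eqJ (b * y) (phi r).
have Ig_sub : forall r1 r2 e, Ig r1 -> Ig r2 -> Ig (r1 - e * r2).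
  move=> r1 r2 e [b1 [h1 e1]] [b2 [h2 e2]]; exists (b1 - phi e * b2); split.
    by apply: HgB h1 _; apply: (Hg_eq _ (HgM (Hg_phi e) h2)); rewrite /= !add0r.
  rewrite mulrBl rmorphB rmorphM -mulrA; apply: eqJ_sub e1 (eqJ_phiMl _ e2).
have Igq : Ig q by exists x; split => //; apply: eqI_J.
have Hby : forall b, Hg (m, n) b -> Hg (0, 0) (b * y).
  by move=> b hb; apply: (Hg_eq _ (HgM hb Hy)); rewrite /= !subrr.
have [d [d0 [b0 [Hb0 eb0]] dvd]] := min_gen Ig_sub q0 Igq.
have shb0 := Hg_shift Hb0.
have kill : forall t, Hg (m, n) t -> eqJ (t * y) 0 -> J t.
  move=> t ht et; apply: (J_cancel_r (Hg_shift ht) q0').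
  apply: J_eqI (J_mulr x (eqJ0' et)) _.
  by rewrite -mulrA; apply: eqI_mull.
have lsurj : forall b, Hg (m, n) b -> exists e, J (b - phi e * b0).
  move=> b hb; have [r hr] := red0 (Hby b hb).
  have hd : d %| r by apply: dvd; exists b; split => //; apply: eqI_J.
  exists (r %/ d); apply: kill.
    by apply: HgB hb _; apply: (Hg_eq _ (HgM (Hg_phi _) Hb0)); rewrite /= !add0r.
  rewrite mulrBl -mulrA; apply: eqJ_trans (eqJ_sub (eqI_J hr) (eqJ_phiMl _ eb0)) _.
  by rewrite -rmorphM divpK // subrr; apply: eqJ_refl.
exists b0; split => //.
- move=> b hb; have [e he] := lsurj b hb.
  by exists (phi e); split => //; apply: Hg_phi.
- move=> c hc hJ; apply: (J_cancel_r (Hg_shift hc) d0).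
  apply: J_eqJ (J_mulr y hJ) _; rewrite -mulrA.
  exact: eqJ_shiftMl (Hg_shift hc) eb0.
- move=> b hb; have [e he] := lsurj b hb.
  exists (phi (e \Po ('X + (sh (m, n))%:P))); split; first exact: Hg_phi.
  apply: J_eqI he _; apply: eqI_sub; first exact: eqI_refl.
  exact: shiftP_poly.
- move=> c hc hJ.
  have [e0 he0] := lsurj x Hx.
  have shy := Hg_shift Hy.
  pose e0' := e0 \Po ('X - (sh (- m, - n))%:P).
  have E : eqJ (phi e0' * y * b0) (phi q').
    apply: (@eqJ_trans _ (y * (phi e0 * b0))).
      by rewrite [y * _]mulrA; apply: eqI_J; apply: eqI_mulr; apply: eqI_sym; apply: shiftP_polyR.
    apply: eqJ_trans _ (eqI_J hyx).
    apply: eqJ_shiftMl shy _; apply: eqJ_sym; exact: he0.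
  apply: (J_cancel q0'); apply: (@J_eqJ (phi e0' * y * b0 * c)).
  2: exact: (eqJ_mulr c E).
  rewrite -!mulrA; apply: J_phiMl; apply: J_shiftMl shy _; exact: hJ.
Qed.

End Abs.


Section Alg.
Variable R : realType.
Local Notation C := (complex R).
Local Notation F := (FreeAlg R).

Lemma malg_mulC (x : F) (k : C) : x * k%:MP = k%:MP * x.
Proof.
rewrite (monalgE x) mulr_suml mulr_sumr; apply: eq_bigr => m _.
by rewrite !malgM_def !fgmulUU mulm1 mul1m [k * _]mulrC.
Qed.

Lemma F_scalerAr (k : C) (x y : F) : k *: (x * y) = x * (k *: y).
Proof.
rewrite -(mul_malgC k (x*y)) -(mul_malgC k y).
by rewrite mulrA -malg_mulC mulrA.
Qed.
End Alg.

HB.instance Definition _ (R : realType) := GRing.Lalgebra.on (FreeAlg R).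
HB.instance Definition _ (R : realType) :=
  GRing.Lalgebra_isAlgebra.Build (complex R) (FreeAlg R) (@F_scalerAr R).

Section Conc.
Variable R : realType.
Local Notation C := (complex R).
Local Notation F := (FreeAlg R).

Lemma peval_horner (p : {poly C}) (z : F) : peval p z = horner_alg z p.
Proof.
rewrite /horner_alg /horner_morph (@horner_coef_wide _ (size p)).
  by rewrite /peval; apply: eq_bigr => i _; rewrite coef_map /= mulr_algl.
by rewrite map_polyE (leq_trans (size_Poly _)) // size_map.
Qed.

Lemma horner_comp (p r : {poly C}) (z : F) :
  horner_alg z (p \Po r) = horner_alg (horner_alg z r) p.
Proof.
rewrite -[in RHS]peval_horner /peval comp_polyE raddf_sum /=; apply: eq_bigr => i _.
by rewrite -mul_polyC rmorphM /= horner_algC mulr_algl rmorphXn.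
Qed.

Variables (a1 a2 : C) (p1 p2 : {poly C}).
Local Notation I := (relIdeal a1 a2 p1 p2).

Lemma I0 : I 0.
Proof. by exists [::]; rewrite big_nil. Qed.
Lemma ID x y : I x -> I y -> I (x + y).
Proof. by move=> [s1 ->] [s2 ->]; exists (s1 ++ s2); rewrite big_cat. Qed.
Lemma IMl z x : I x -> I (z * x).
Proof.
move=> [s ->]; exists [seq (z * t.1.1, t.1.2, t.2) | t <- s].
by rewrite big_map mulr_sumr; apply: eq_bigr => t _; rewrite !mulrA.
Qed.
Lemma IMr x z : I x -> I (x * z).
Proof.
move=> [s ->]; exists [seq (t.1.1, t.1.2, t.2 * z) | t <- s].
by rewrite big_map mulr_suml; apply: eq_bigr => t _; rewrite !mulrA.
Qed.
Lemma Irel k : I (@Defs.rel R a1 a2 p1 p2 k).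
Proof. by exists [:: (1, k, 1)]; rewrite big_seq1 mul1r mulr1. Qed.

Local Notation H := (gH R).
Local Notation X1p := (gX1p R).
Local Notation X1m := (gX1m R).
Local Notation X2p := (gX2p R).
Local Notation X2m := (gX2m R).
Local Notation phi := (horner_alg (gH R)).

Lemma pevalE (p : {poly C}) (c : C) :
  peval p (H + c *: 1) = phi (p \Po ('X + c%:P)).
Proof. by rewrite horner_comp rmorphD /= horner_algX horner_algC -peval_horner. Qed.
Lemma pevalE' (p : {poly C}) (c : C) :
  peval p (H - c *: 1) = phi (p \Po ('X - c%:P)).
Proof. by rewrite horner_comp rmorphB /= horner_algX horner_algC -peval_horner. Qed.

Lemma C_hX1p : shiftP H I a1 X1p.
Proof. by have := Irel (@Ordinal 10 0 isT); rewrite /Defs.rel /= /shiftP /eqI opprD addrA. Qed.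
Lemma C_hX1m : shiftP H I (- a1) X1m.
Proof. by have := Irel (@Ordinal 10 1 isT); rewrite /Defs.rel /= /shiftP /eqI opprD addrA scaleNr opprK. Qed.
Lemma C_hX2p : shiftP H I a2 X2p.
Proof. by have := Irel (@Ordinal 10 2 isT); rewrite /Defs.rel /= /shiftP /eqI opprD addrA. Qed.
Lemma C_hX2m : shiftP H I (- a2) X2m.
Proof. by have := Irel (@Ordinal 10 3 isT); rewrite /Defs.rel /= /shiftP /eqI opprD addrA scaleNr opprK. Qed.
Lemma C_c4 : eqI I (X1p * X1m) (phi (p1 \Po ('X - (a1 / 2%:R)%:P))).
Proof. by have := Irel (@Ordinal 10 4 isT); rewrite /Defs.rel /= pevalE'. Qed.
Lemma C_c5 : eqI I (X1m * X1p) (phi (p1 \Po ('X + (a1 / 2%:R)%:P))).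
Proof. by have := Irel (@Ordinal 10 5 isT); rewrite /Defs.rel /= pevalE. Qed.
Lemma C_c6 : eqI I (X2p * X2m) (phi (p2 \Po ('X - (a2 / 2%:R)%:P))).
Proof. by have := Irel (@Ordinal 10 6 isT); rewrite /Defs.rel /= pevalE'. Qed.
Lemma C_c7 : eqI I (X2m * X2p) (phi (p2 \Po ('X + (a2 / 2%:R)%:P))).
Proof. by have := Irel (@Ordinal 10 7 isT); rewrite /Defs.rel /= pevalE. Qed.
Lemma C_c8 : eqI I (X1p * X2m) (X2m * X1p).
Proof. exact: (Irel (@Ordinal 10 8 isT)). Qed.
Lemma C_c9 : eqI I (X1m * X2p) (X2p * X1m).
Proof. exact: (Irel (@Ordinal 10 9 isT)). Qed.

End Conc.


Section Conc2.
Variable R : realType.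
Local Notation C := (complex R).
Local Notation F := (FreeAlg R).
Local Notation H := (gH R).
Local Notation X1p := (gX1p R).
Local Notation X1m := (gX1m R).
Local Notation X2p := (gX2p R).
Local Notation X2m := (gX2m R).

Lemma wdegM (m1 m2 : {fmonom 'I_5}) :
  wdeg (mmul m1 m2) = ((wdeg m1).1 + (wdeg m2).1, (wdeg m1).2 + (wdeg m2).2).
Proof. rewrite /wdeg fmM !count_cat /=; congr pair; lia. Qed.

Lemma hom0 g : homog g (0 : F).
Proof. by move=> m; rewrite mcoeff0 eqxx. Qed.
Lemma homD g (x y : F) : homog g x -> homog g y -> homog g (x + y).
Proof.
move=> hx hy m; rewrite mcoeffD; case: (eqVneq (x@_m) 0) => [e|ne] h.
  by move: h; rewrite e add0r; exact: hy.
exact: hx m ne.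
Qed.
Lemma homZ g c (x : F) : homog g x -> homog g (c *: x).
Proof.
move=> hx m; rewrite mcoeffZ => h; apply: hx; apply: contraNneq h => ->.
by rewrite mulr0.
Qed.
Lemma homM g h (x y : F) : homog g x -> homog h y -> homog (g.1 + h.1, g.2 + h.2) (x * y).
Proof.
move=> hx hy m; rewrite mcoeff_neq0 => /msuppM_le [k1 [k2 [i1 i2 ->]]].
by rewrite wdegM (hx k1) ?(hy k2) // mcoeff_neq0.
Qed.
Lemma hom1 : homog (0, 0) (1 : F).
Proof.
move=> m; rewrite mcoeff1; case E: (m == _); last by rewrite eqxx.
by rewrite (eqP E) /wdeg fm1.
Qed.
Lemma wdeg_fmu i : wdeg (fmu i) =
  ((val i == 1%N)%:Z - (val i == 2%N)%:Z, (val i == 3%N)%:Z - (val i == 4%N)%:Z).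
Proof. by rewrite /wdeg fmU /= !addn0. Qed.
Lemma hom_gen i : homog (wdeg (fmu i)) (gen R i).
Proof.
move=> m; rewrite /gen mcoeffU1; case E: (fmu i == _); last by rewrite eqxx.
by rewrite -(eqP E).
Qed.
Lemma homH : homog (0, 0) H.
Proof. by have := @hom_gen (@Ordinal 5 0 isT); rewrite wdeg_fmu. Qed.
Lemma homX1p : homog (1, 0) X1p.
Proof. by have := @hom_gen (@Ordinal 5 1 isT); rewrite wdeg_fmu. Qed.
Lemma homX1m : homog (-1, 0) X1m.
Proof. by have := @hom_gen (@Ordinal 5 2 isT); rewrite wdeg_fmu. Qed.
Lemma homX2p : homog (0, 1) X2p.
Proof. by have := @hom_gen (@Ordinal 5 3 isT); rewrite wdeg_fmu. Qed.
Lemma homX2m : homog (0, -1) X2m.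
Proof. by have := @hom_gen (@Ordinal 5 4 isT); rewrite wdeg_fmu. Qed.

Lemma mkU (c : C) (k : {fmonom 'I_5}) : (<< c *g k >> : F) = c *: (<< k >> : F).
Proof. by apply/malgP => m; rewrite mcoeffZ !mcoeffU mulr_natr. Qed.

Lemma FM_nil : FMonom [::] = mone :> {fmonom 'I_5}.
Proof. by apply/eqP; rewrite fmP fm1. Qed.
Lemma FM_rcons (s : seq 'I_5) i : FMonom (rcons s i) = mmul (FMonom s) (fmu i).
Proof. by apply/eqP; rewrite fmP fmM fmU /= cats1. Qed.
Lemma UM (k1 k2 : {fmonom 'I_5}) : (<< mmul k1 k2 >> : F) = (<< k1 >> : F) * (<< k2 >> : F).
Proof. by rewrite malgM_def fgmulUU mulr1. Qed.

Lemma homog_ind (P : int * int -> F -> Prop) :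
  (forall g, P g 0) ->
  (forall g x y, P g x -> P g y -> P g (x + y)) ->
  (forall g c x, P g x -> P g (c *: x)) ->
  P (0, 0) 1 ->
  (forall g z, P g z -> P g (z * H)) ->
  (forall g z, P g z -> P (g.1 + 1, g.2) (z * X1p)) ->
  (forall g z, P g z -> P (g.1 - 1, g.2) (z * X1m)) ->
  (forall g z, P g z -> P (g.1, g.2 + 1) (z * X2p)) ->
  (forall g z, P g z -> P (g.1, g.2 - 1) (z * X2m)) ->
  forall g b, homog g b -> P g b.
Proof.
move=> P0 PD PZ P1 PH P1p P1m P2p P2m.
have Pw : forall s : seq 'I_5, P (wdeg (FMonom s)) << FMonom s >>.
  elim/last_ind => [|s i IH].
    by rewrite FM_nil (_ : wdeg mone = (0, 0)) //; rewrite /wdeg fm1.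
  rewrite FM_rcons UM wdegM wdeg_fmu.
  case: i => [[|[|[|[|[|j]]]]] hi] //=.
  - rewrite (bool_irrelevance hi isT) ?subrr ?subr0 ?addr0. have h := PH _ _ IH. exact h.
  - rewrite (bool_irrelevance hi isT) ?subrr ?subr0 ?addr0; exact (P1p _ _ IH).
  - rewrite (bool_irrelevance hi isT) ?subrr ?subr0 ?sub0r ?addr0; exact (P1m _ _ IH).
  - rewrite (bool_irrelevance hi isT) ?subrr ?subr0 ?addr0; exact (P2p _ _ IH).
  - rewrite (bool_irrelevance hi isT) ?subrr ?subr0 ?sub0r ?addr0; exact (P2m _ _ IH).
move=> g b hb; rewrite (monalgE b) big_seq; apply: (big_ind (P g)).
- exact (P0 g).
- by move=> x y hx hy; exact (PD _ _ _ hx hy).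
move=> k hk; rewrite mkU; apply: (PZ g).
have := Pw k; rewrite fmK (hb k) ?mcoeff_neq0 //.
Qed.

End Conc2.




Lemma TJ1 (R : realType) (a1 a2 : complex R) (p1 p2 : {poly complex R}) x :
  torsIdeal a1 a2 p1 p2 x -> J (gH R) (relIdeal a1 a2 p1 p2) x.
Proof.
move=> [f [f0 hf]]; exists f; split; first exact f0.
move: hf; rewrite (peval_horner f (gH R)); exact id.
Qed.
Lemma TJ2 (R : realType) (a1 a2 : complex R) (p1 p2 : {poly complex R}) x :
  J (gH R) (relIdeal a1 a2 p1 p2) x -> torsIdeal a1 a2 p1 p2 x.
Proof.
move=> [f [f0 hf]]; exists f; split; first exact f0.
rewrite (peval_horner f (gH R)); exact hf.
Qed.

Unset Implicit Arguments.

Theorem mainTheorem9 (R : realType) (a1 a2 : complex R)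
  (p1 p2 : {poly complex R}) :
  p1 != 0 -> p2 != 0 ->
  (p1 \Po ('X + (a2 / 2%:R)%:P)) * (p2 \Po ('X + (a1 / 2%:R)%:P))
    = (p1 \Po ('X - (a2 / 2%:R)%:P)) * (p2 \Po ('X - (a1 / 2%:R)%:P)) ->
  crystalline_quot (torsIdeal a1 a2 p1 p2).
Proof.
move=> p1n p2n _ g.
have t1 := @abs_main _ (FreeAlg R) (gH R) (gX1p R) (gX1m R) (gX2p R) (gX2m R)
  a1 a2 p1 p2 (relIdeal a1 a2 p1 p2).
have t2 := t1 (@I0 R a1 a2 p1 p2).
have t3 := t2 (@ID R a1 a2 p1 p2).
have t4 := t3 (@IMl R a1 a2 p1 p2) (@IMr R a1 a2 p1 p2).
have t5 := t4 (@C_hX1p R a1 a2 p1 p2) (@C_hX1m R a1 a2 p1 p2) (@C_hX2p R a1 a2 p1 p2) (@C_hX2m R a1 a2 p1 p2).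
have t6 := t5 (@C_c4 R a1 a2 p1 p2) (@C_c5 R a1 a2 p1 p2) (@C_c6 R a1 a2 p1 p2) (@C_c7 R a1 a2 p1 p2).
have t7 := t6 (@C_c8 R a1 a2 p1 p2) (@C_c9 R a1 a2 p1 p2) p1n p2n (@homog R).
have t8 := t7 (@hom0 R).
have t9 := t8 (@homD R).
have t10 := t9 (@homZ R).
have t11 := t10 (@homM R).
have t12 := t11 (@hom1 R) (@homH R).
have t13 := t12 (@homX1p R) (@homX1m R) (@homX2p R) (@homX2m R).
have t14 := t13 (@homog_ind R) g.
case: t14 => a [h1 h2 h3 h4 h5]; exists a; split.
- exact h1.
- move=> b hb; have [c [hc hJ]] := h2 b hb; exists c; split; first exact hc.
  exact: TJ2.
- by move=> c hc /TJ1 hJ; apply: TJ2; apply: h3.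
- move=> b hb; have [c [hc hJ]] := h4 b hb; exists c; split; first exact hc.
  exact: TJ2.
- by move=> c hc /TJ1 hJ; apply: TJ2; apply: h5.
Qed.
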